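(* Let $b_0,\dots,b_{n-1}\in\{0,1\}$, $D=\Theta^{-1}[b_0,\dots,b_{n-1}]_0\subset\Omega$, and let $1\le r<k\le s$ be integers. Then $\mathbb P(\{\omega_0=s\}\cap D)\le\mathbb P(\{\omega_0=r\}\cap D)+\mathbb P(\{\omega_0=k\}\cap D)$.
   Context: $\Omega=\mathbb N_+^{\mathbb N}$ with $\mathbb P$ the product measure $\mathbb P[a_0,\dots,a_{m-1}]=\prod_{j<m}2^{-a_j}$ (i.i.d. coordinates with $\mathbb P(\omega_j=a)=2^{-a}$). $\theta(a_1,a_2)=1$ if $a_2=a_1+1$ and $0$ otherwise; $\Theta:\Omega\to\{0,1\}^{\mathbb N}$, $(\Theta\omega)_j=\theta(\omega_j,\omega_{j+1})$; $[b_0,\dots,b_{n-1}]_0=\{\gamma\in\{0,1\}^{\mathbb N}:\gamma_j=b_j,0\le j<n\}$. *)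

(* Defs.v *)
From Stdlib Require Import Reals Lra Lia Arith List.
Open Scope R_scope.

(* A point of Omega = N_+^N is a sequence omega : nat -> nat (coordinates >= 1). *)
Definition Omega := nat -> nat.

(* theta(a1,a2) = 1 iff a2 = a1 + 1 ; encoded as a boolean (true = 1, false = 0) *)
Definition theta (a1 a2 : nat) : bool := Nat.eqb a2 (S a1).

Definition Theta (w : Omega) (j : nat) : bool := theta (w j) (w (S j)).

Definition inD (n : nat) (b : nat -> bool) (w : Omega) : bool :=
  forallb (fun j => Bool.eqb (Theta w j) (b j)) (seq 0 n).

Fixpoint rsum (N : nat) (g : nat -> R) : R :=
  match N with 0 => 0 | S N' => rsum N' g + g (S N') end.

Fixpoint csum (k N : nat) (F : list nat -> R) : R :=
  match k with
  | 0 => F nil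
  | S k' => rsum N (fun a => csum k' N (fun l => F (a :: l)))
  end.

Definition ext (l : list nat) : Omega := fun j => nth j l 1%nat.

(* product measure of the cylinder [a_0,...,a_{m-1}] : prod 2^{-a_j} *)
Definition weight (l : list nat) : R :=
  fold_right (fun a acc => (/ 2) ^ a * acc) 1 l.

(* N-th approximation of P(E): sum of P[a_0..a_{N-1}] over prefixes with
   entries in {1..N} for which E holds.  For events depending on finitely
   many coordinates (cylinder events) this converges to P(E). *)
Definition Papprox (N : nat) (E : Omega -> bool) : R :=
  csum N N (fun l => if E (ext l) then weight l else 0).

Definition Prob (E : Omega -> bool) (p : R) : Prop :=
  Un_cv (fun N => Papprox N E) p.

(* Main.v *)
Require Import Defs.
From Stdlib Require Import Reals Arith Bool Lra Lia List ZArith.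
Open Scope R_scope.

Lemma rsum_ext N f g : (forall a, f a = g a) -> rsum N f = rsum N g.
Proof. intros H; induction N; simpl; [reflexivity| rewrite IHN, H; reflexivity]. Qed.

Lemma rsum_le N f g : (forall a, f a <= g a) -> rsum N f <= rsum N g.
Proof. intros H; induction N; simpl; [lra| specialize (H (S N)); lra]. Qed.

Lemma rsum_nonneg N f : (forall a, 0 <= f a) -> 0 <= rsum N f.
Proof. intros H; induction N; simpl; [lra| specialize (H (S N)); lra]. Qed.

Lemma rsum_plus N f g : rsum N (fun a => f a + g a) = rsum N f + rsum N g.
Proof. induction N; simpl; [lra| rewrite IHN; lra]. Qed.

Lemma rsum_minus N f g : rsum N (fun a => f a - g a) = rsum N f - rsum N g.
Proof. induction N; simpl; [lra| rewrite IHN; lra]. Qed.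

Lemma rsum_scal N c f : rsum N (fun a => c * f a) = c * rsum N f.
Proof. induction N; simpl; [lra| rewrite IHN; lra]. Qed.

Lemma rsum_scal_r N c f : rsum N (fun a => f a * c) = rsum N f * c.
Proof. induction N; simpl; [lra| rewrite IHN; lra]. Qed.

Lemma rsum_ind N v f : rsum N (fun a => if Nat.eqb a v then f a else 0) =
  if andb (Nat.leb 1 v) (Nat.leb v N) then f v else 0.
Proof.
  induction N; cbn [rsum].
  - destruct (Nat.leb 1 v) eqn:E1; destruct (Nat.leb v 0) eqn:E2; cbn [andb]; try lra.
    apply Nat.leb_le in E1; apply Nat.leb_le in E2; lia.
  - rewrite IHN. destruct (Nat.eqb (S N) v) eqn:E.
    + apply Nat.eqb_eq in E; subst.
      destruct (Nat.leb (S N) N) eqn:E2; [apply Nat.leb_le in E2; lia|].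
      rewrite Nat.leb_refl. replace (Nat.leb 1 (S N)) with true by reflexivity. cbn [andb]. lra.
    + apply Nat.eqb_neq in E.
      destruct (Nat.leb 1 v); cbn [andb]; [|lra].
      destruct (Nat.leb v N) eqn:E2; destruct (Nat.leb v (S N)) eqn:E3; try lra.
      * apply Nat.leb_le in E2; apply Nat.leb_gt in E3; lia.
      * apply Nat.leb_gt in E2; apply Nat.leb_le in E3; lia.
Qed.

Lemma csum_ext K N F H : (forall l, F l = H l) -> csum K N F = csum K N H.
Proof.
  revert F H; induction K; intros F H Hf; simpl; [apply Hf|].
  apply rsum_ext; intro a; apply IHK; intro l; apply Hf.
Qed.

Lemma csum_len_ext K N F H : (forall l, length l = K -> F l = H l) -> csum K N F = csum K N H.
Proof.
  revert F H; induction K; intros F H Hf; simpl; [apply Hf; reflexivity|].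
  apply rsum_ext; intro a; apply IHK; intros l Hl; apply Hf; simpl; lia.
Qed.

Lemma csum_le K N F H : (forall l, F l <= H l) -> csum K N F <= csum K N H.
Proof.
  revert F H; induction K; intros F H Hf; simpl; [apply Hf|].
  apply rsum_le; intro a; apply IHK; intro l; apply Hf.
Qed.

Lemma csum_nonneg K N F : (forall l, 0 <= F l) -> 0 <= csum K N F.
Proof.
  revert F; induction K; intros F Hf; simpl; [apply Hf|].
  apply rsum_nonneg; intro a; apply IHK; intro l; apply Hf.
Qed.

Lemma csum_scal K N c F : csum K N (fun l => c * F l) = c * csum K N F.
Proof.
  revert F; induction K; intros F; simpl; [reflexivity|].
  rewrite <- rsum_scal. apply rsum_ext; intro a. apply IHK.
Qed.

Lemma csum_app m j N F : csum (m + j) N F = csum m N (fun l1 => csum j N (fun l2 => F (l1 ++ l2))).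
Proof.
  revert F; induction m; intros F; simpl; [reflexivity|].
  apply rsum_ext; intro a. rewrite IHm. reflexivity.
Qed.

Lemma csum_mono_N K N F : (forall l, 0 <= F l) -> csum K N F <= csum K (S N) F.
Proof.
  revert F; induction K; intros F Hf; simpl; [lra|].
  apply Rle_trans with (rsum N (fun a => csum K (S N) (fun l => F (a :: l)))).
  - apply rsum_le; intro a; apply IHK; intro; apply Hf.
  - assert (0 <= csum K (S N) (fun l => F (S N :: l))) by (apply csum_nonneg; intro; apply Hf). lra.
Qed.

Lemma weight_nonneg l : 0 <= weight l.
Proof. induction l; simpl; [lra|]. apply Rmult_le_pos; [apply pow_le; lra| exact IHl]. Qed.

Lemma weight_app l1 l2 : weight (l1 ++ l2) = weight l1 * weight l2.
Proof. induction l1; simpl; [lra| rewrite IHl1; ring]. Qed.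

Definition cN N := rsum N (fun a => (/2)^a).

Lemma csum_weight j N : csum j N weight = (cN N)^j.
Proof.
  induction j; simpl; [reflexivity|].
  rewrite <- IHj. unfold cN. rewrite <- rsum_scal_r. apply rsum_ext; intro a.
  apply csum_scal.
Qed.

Lemma cN_eq N : cN N = 1 - (/2)^N.
Proof. unfold cN; induction N; simpl; [lra|]. rewrite IHN. simpl. field. Qed.

Lemma pow_le1 x j : 0 <= x <= 1 -> x ^ j <= 1.
Proof. intros H; induction j; simpl; [lra|]. assert (0 <= x^j) by (apply pow_le; lra). nra. Qed.

Lemma bernoulli x j : 0 <= x <= 1 -> 1 - INR j * x <= (1 - x) ^ j.
Proof.
  intros H; induction j; [simpl; lra|]. rewrite S_INR. cbn [pow].
  assert (0 <= INR j) by apply pos_INR. nra.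
Qed.

Lemma half_pow_le a b : (a <= b)%nat -> (/2)^b <= (/2)^a.
Proof.
  intros H. replace b with (a + (b - a))%nat by lia. rewrite pow_add.
  assert (0 <= (/2)^a) by (apply pow_le; lra).
  assert ((/2)^(b-a) <= 1) by (apply pow_le1; lra). nra.
Qed.

Lemma forallb_map_S (f : nat -> bool) l : forallb f (map S l) = forallb (fun j => f (S j)) l.
Proof. induction l; simpl; [reflexivity| rewrite IHl; reflexivity]. Qed.

Lemma inD_S n b w : inD (S n) b w =
  Bool.eqb (Theta w 0) (b 0%nat) && inD n (fun j => b (S j)) (fun j => w (S j)).
Proof.
  unfold inD. cbn [seq forallb]. f_equal. rewrite <- seq_shift, forallb_map_S. reflexivity.
Qed.

Lemma forallb_ext_in (f g : nat -> bool) l : (forall j, In j l -> f j = g j) -> forallb f l = forallb g l.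
Proof.
  induction l; intros H; simpl; [reflexivity|]. rewrite H by (left; reflexivity).
  rewrite IHl by (intros; apply H; right; assumption). reflexivity.
Qed.

Lemma inD_dep n b w w' : (forall j, (j <= n)%nat -> w j = w' j) -> inD n b w = inD n b w'.
Proof.
  intros H. unfold inD. apply forallb_ext_in. intros j Hj. apply in_seq in Hj.
  unfold Theta. rewrite (H j) by lia. rewrite (H (S j)) by lia. reflexivity.
Qed.

Definition G (N K n : nat) (b : nat -> bool) (a : nat) : R :=
  csum K N (fun l => if inD n b (ext (a :: l)) then weight l else 0).

Lemma G_nonneg N K n b a : 0 <= G N K n b a.
Proof. apply csum_nonneg; intro l; destruct (inD _ _ _); [apply weight_nonneg| lra]. Qed.

Lemma G_S N K n b a : G N (S K) (S n) b a =
  rsum N (fun a1 => if Bool.eqb (Nat.eqb a1 (S a)) (b 0%nat)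
                    then (/2)^a1 * G N K n (fun j => b (S j)) a1 else 0).
Proof.
  unfold G. cbn [csum]. apply rsum_ext; intro a1.
  rewrite (csum_ext K N _ (fun l => if Bool.eqb (Nat.eqb a1 (S a)) (b 0%nat) then
        (/2)^a1 * (if inD n (fun j => b (S j)) (ext (a1 :: l)) then weight l else 0) else 0)).
  - destruct (Bool.eqb _ _); [apply csum_scal|].
    transitivity (0 * csum K N (fun _ => 0)); [|ring].
    rewrite <- csum_scal. apply csum_ext; intros; ring.
  - intro l. rewrite inD_S. change (Theta (ext (a :: a1 :: l)) 0) with (Nat.eqb a1 (S a)).
    change (fun j => ext (a :: a1 :: l) (S j)) with (ext (a1 :: l)).
    destruct (Bool.eqb _ _); cbn [andb]; [|reflexivity].
    destruct (inD _ _ _); simpl; ring.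
Qed.

Lemma main_ineq N n : forall K b r k s, (n <= K)%nat -> (r < k)%nat -> (k <= s)%nat ->
  (/2)^s * G N K n b s <= (/2)^r * G N K n b r + (/2)^k * G N K n b k.
Proof.
  induction n; intros K b r k s HK Hrk Hks.
  - assert (E : forall a, G N K 0 b a = G N K 0 b 0) by (intro; reflexivity).
    rewrite (E s), (E r), (E k).
    pose proof (G_nonneg N K 0 b 0).
    pose proof (half_pow_le r s ltac:(lia)).
    assert (0 <= (/2)^k) by (apply pow_le; lra). nra.
  - destruct K as [|K]; [lia|].
    rewrite !G_S.
    set (y := fun a1 => (/2)^a1 * G N K n (fun j => b (S j)) a1).
    assert (Hy : forall a, 0 <= y a) by (intro; unfold y; apply Rmult_le_pos; [apply pow_le; lra| apply G_nonneg]).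
    pose proof (half_pow_le r k ltac:(lia)).
    pose proof (half_pow_le k s ltac:(lia)).
    assert (0 <= (/2)^s) by (apply pow_le; lra).
    destruct (b 0%nat).
    + assert (Hf : forall v, rsum N (fun a1 => if Bool.eqb (Nat.eqb a1 (S v)) true then y a1 else 0)
                 = if Nat.leb (S v) N then y (S v) else 0).
      { intro v. rewrite (rsum_ext N _ (fun a1 => if Nat.eqb a1 (S v) then y a1 else 0)).
        - rewrite rsum_ind. reflexivity.
        - intro a1. destruct (Nat.eqb a1 (S v)); reflexivity. }
      unfold y in Hf. rewrite !Hf. fold y.
      destruct (Nat.leb (S s) N) eqn:Es.
      * apply Nat.leb_le in Es.
        replace (Nat.leb (S r) N) with true by (symmetry; apply Nat.leb_le; lia).
        replace (Nat.leb (S k) N) with true by (symmetry; apply Nat.leb_le; lia).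
        assert (IH := IHn K (fun j => b (S j)) (S r) (S k) (S s) ltac:(lia) ltac:(lia) ltac:(lia)).
        fold (y (S s)) (y (S r)) (y (S k)) in IH.
        pose proof (Hy (S r)); pose proof (Hy (S k)); pose proof (Hy (S s)).
        assert ((/2)^s * y (S s) <= (/2)^s * (y (S r) + y (S k))) by (apply Rmult_le_compat_l; lra).
        assert ((/2)^s * y (S r) <= (/2)^r * y (S r)) by (apply Rmult_le_compat_r; lra).
        assert ((/2)^s * y (S k) <= (/2)^k * y (S k)) by (apply Rmult_le_compat_r; lra).
        change ((/ 2) ^ s * y (S s) <= (/ 2) ^ r * y (S r) + (/ 2) ^ k * y (S k)). lra.
      * change ((/ 2) ^ s * 0 <= (/ 2) ^ r * (if Nat.leb (S r) N then y (S r) else 0) + (/ 2) ^ k * (if Nat.leb (S k) N then y (S k) else 0)).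
        assert (0 <= (/2)^r) by (apply pow_le; lra).
        assert (0 <= (/2)^k) by (apply pow_le; lra).
        pose proof (Hy (S r)); pose proof (Hy (S k)).
        destruct (Nat.leb (S r) N); destruct (Nat.leb (S k) N); nra.
    + set (x := fun v => rsum N (fun a1 => if Nat.eqb a1 (S v) then y a1 else 0)).
      set (St := rsum N y).
      assert (Hf : forall v, rsum N (fun a1 => if Bool.eqb (Nat.eqb a1 (S v)) false then y a1 else 0)
                 = St - x v).
      { intro v. unfold St, x. rewrite <- rsum_minus. apply rsum_ext; intro a1.
        destruct (Nat.eqb a1 (S v)); simpl; ring. }
      unfold y in Hf. rewrite !Hf.
      assert (Hx : forall v, 0 <= x v).
      { intro v; apply rsum_nonneg; intro a1; destruct (Nat.eqb _ _); [apply Hy|lra]. }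
      assert (Hrk' : x r + x k <= St).
      { unfold x, St. rewrite <- rsum_plus. apply rsum_le; intro a1.
        destruct (Nat.eqb a1 (S r)) eqn:E1; destruct (Nat.eqb a1 (S k)) eqn:E2.
        - apply Nat.eqb_eq in E1; apply Nat.eqb_eq in E2; lia.
        - pose proof (Hy a1); lra.
        - pose proof (Hy a1); lra.
        - pose proof (Hy a1); lra. }
      pose proof (Hx r); pose proof (Hx k); pose proof (Hx s).
      assert (0 <= (/2)^s * x s) by nra.
      assert (0 <= ((/2)^k - (/2)^s) * St) by nra.
      assert (0 <= ((/2)^r - (/2)^k) * x k) by nra.
      assert (0 <= (/2)^r * (St - x r - x k)) by nra.
      nra.
Qed.

Lemma cv_ev_ext u v l N0 : (forall n, (n >= N0)%nat -> u n = v n) -> Un_cv v l -> Un_cv u l.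
Proof.
  intros He Hv eps Heps. destruct (Hv eps Heps) as [N1 HN1]. exists (max N0 N1).
  intros n Hn. rewrite He by lia. apply HN1. lia.
Qed.

Lemma lim_le u v a b N0 : Un_cv u a -> Un_cv v b -> (forall n, (n >= N0)%nat -> u n <= v n) -> a <= b.
Proof.
  intros Hu Hv Hle. apply Rnot_lt_le. intro Hlt.
  destruct (Hu ((a - b)/2) ltac:(lra)) as [N1 H1].
  destruct (Hv ((a - b)/2) ltac:(lra)) as [N2 H2].
  set (n := max N0 (max N1 N2)).
  specialize (H1 n ltac:(unfold n; lia)). specialize (H2 n ltac:(unfold n; lia)).
  specialize (Hle n ltac:(unfold n; lia)).
  unfold R_dist in *. apply Rabs_def2 in H1. apply Rabs_def2 in H2. lra.
Qed.

Lemma sq_le_pow N : (N * N <= 2 * 2 ^ N)%nat.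
Proof.
  induction N as [|N IH]; [simpl; lia|].
  destruct (le_lt_dec N 2) as [Hs|Hs].
  - destruct N as [|[|[|N]]]; simpl; lia.
  - change (2 ^ S N)%nat with (2 * 2 ^ N)%nat. nia.
Qed.

Lemma n_half_pow N : (1 <= N)%nat -> INR N * (/2)^N <= 2 / INR N.
Proof.
  intros HN.
  assert (H1 : INR N * INR N <= 2 * 2 ^ N).
  { rewrite <- mult_INR. replace (2 * 2 ^ N) with (INR (2 * 2 ^ N)).
    - apply le_INR, sq_le_pow.
    - rewrite mult_INR, pow_INR. replace (INR 2) with 2 by (simpl; ring). reflexivity. }
  assert (Hq : (/2)^N * 2^N = 1).
  { rewrite <- Rpow_mult_distr. replace (/2 * 2) with 1 by field. apply pow1. }
  assert (HNp : 0 < INR N) by (apply lt_0_INR; lia).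
  assert (0 < (/2)^N) by (apply pow_lt; lra).
  apply (Rmult_le_reg_r (INR N)); [lra|].
  replace (2 / INR N * INR N) with 2 by (field; lra).
  replace (INR N * (/ 2) ^ N * INR N) with ((INR N * INR N) * (/2)^N) by ring.
  apply Rle_trans with ((2 * 2^N) * (/2)^N); [apply Rmult_le_compat_r; lra|].
  rewrite Rmult_assoc, (Rmult_comm (2^N)), Hq. lra.
Qed.

Lemma d_cv m : Un_cv (fun N => (cN N) ^ (N - m)) 1.
Proof.
  intros eps Heps.
  destruct (archimed (2 / eps)) as [Ha _].
  assert (Hup : (0 < up (2/eps))%Z).
  { apply lt_IZR. assert (0 < 2/eps) by (apply Rdiv_lt_0_compat; lra). simpl; lra. }
  exists (S (Z.to_nat (up (2/eps)))).
  intros N HN. unfold R_dist.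
  assert (HNr : 2 / eps < INR N).
  { apply Rlt_le_trans with (IZR (up (2/eps))); [lra|].
    rewrite <- (Z2Nat.id (up (2/eps))) by lia. rewrite <- INR_IZR_INZ. apply le_INR. lia. }
  assert (HNp : 0 < INR N) by (apply lt_0_INR; lia).
  rewrite cN_eq.
  assert (0 <= (/2)^N) by (apply pow_le; lra).
  assert ((/2)^N <= 1) by (apply pow_le1; lra).
  pose proof (bernoulli ((/2)^N) (N - m) ltac:(lra)).
  pose proof (pow_le1 (1 - (/2)^N) (N - m) ltac:(lra)).
  pose proof (n_half_pow N ltac:(lia)).
  assert (INR (N - m) <= INR N) by (apply le_INR; lia).
  assert (INR (N - m) * (/2)^N <= INR N * (/2)^N) by (apply Rmult_le_compat_r; lra).
  assert (2 / INR N < eps).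
  { apply (Rmult_lt_reg_r (INR N)); [lra|].
    replace (2 / INR N * INR N) with 2 by (field; lra).
    apply (Rmult_lt_reg_l (/eps)); [apply Rinv_0_lt_compat; lra|].
    replace (/eps * 2) with (2/eps) by (unfold Rdiv; ring).
    replace (/eps * (eps * INR N)) with (INR N) by (field; lra). lra. }
  rewrite Rabs_left1 by lra. lra.
Qed.

Lemma cyl_cv (E : Omega -> bool) (m : nat)
  (Hdep : forall w w', (forall j, (j < m)%nat -> w j = w' j) -> E w = E w') :
  exists p, Prob E p.
Proof.
  set (A := fun N => csum m N (fun l => if E (ext l) then weight l else 0)).
  assert (HA : forall N, (N >= m)%nat -> Papprox N E = A N * (cN N) ^ (N - m)).
  { intros N HN. unfold Papprox, A.
    replace (csum N N) with (csum (m + (N - m)) N) by (f_equal; lia).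
    rewrite csum_app. rewrite <- csum_weight, Rmult_comm, <- csum_scal.
    apply csum_len_ext. intros l1 Hl1.
    rewrite Rmult_comm, <- csum_scal. apply csum_ext. intro l2.
    rewrite (Hdep (ext (l1 ++ l2)) (ext l1)).
    - rewrite weight_app. destruct (E (ext l1)); ring.
    - intros j Hj. unfold ext. apply app_nth1. lia. }
  assert (Hg : Un_growing A).
  { intro N. apply csum_mono_N. intro l. destruct (E _); [apply weight_nonneg| lra]. }
  assert (Hb : has_ub A).
  { exists 1. intros x [i ->]. unfold A.
    apply Rle_trans with (csum m i weight).
    - apply csum_le. intro l. destruct (E _); [lra| apply weight_nonneg].
    - rewrite csum_weight. apply pow_le1. rewrite cN_eq.
      assert (0 <= (/2)^i) by (apply pow_le; lra).
      assert ((/2)^i <= 1) by (apply pow_le1; lra). lra. }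
  destruct (growing_cv A Hg Hb) as [l Hl].
  exists (l * 1). unfold Prob.
  apply cv_ev_ext with (v := fun N => A N * (cN N) ^ (N - m)) (N0 := m).
  - intros; apply HA; lia.
  - apply CV_mult; [exact Hl| apply d_cv].
Qed.

Lemma Papprox_eq K n b a :
  Papprox (S K) (fun w => Nat.eqb (w 0%nat) a && inD n b w) =
  if andb (Nat.leb 1 a) (Nat.leb a (S K)) then (/2)^a * G (S K) K n b a else 0.
Proof.
  rewrite <- (rsum_ind (S K) a (fun a0 => (/2)^a0 * G (S K) K n b a0)). unfold Papprox. cbn [csum]. apply rsum_ext. intro a0.
  change (fun l => if (Nat.eqb (ext (a0 :: l) 0%nat) a && inD n b (ext (a0 :: l))) then weight (a0 :: l) else 0) with (fun l => if (Nat.eqb a0 a && inD n b (ext (a0 :: l))) then weight (a0 :: l) else 0).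
  destruct (Nat.eqb a0 a) eqn:E; cbn [andb].
  - apply Nat.eqb_eq in E; subst. unfold G. rewrite <- csum_scal. apply csum_ext; intro l.
    destruct (inD _ _ _); simpl; ring.
  - transitivity (0 * csum K (S K) (fun _ => 0)); [|ring].
    rewrite <- csum_scal. apply csum_ext; intros; ring.
Qed.

Lemma Ea_dep n b a : forall w w', (forall j, (j < S n)%nat -> w j = w' j) ->
  (Nat.eqb (w 0%nat) a && inD n b w) = (Nat.eqb (w' 0%nat) a && inD n b w').
Proof.
  intros w w' H. rewrite (H 0%nat) by lia. rewrite (inD_dep n b w w'); [reflexivity|].
  intros; apply H; lia.
Qed.

Theorem lemma5 (n : nat) (b : nat -> bool) (r k s : nat)
  (hr : (1 <= r)%nat) (hrk : (r < k)%nat) (hks : (k <= s)%nat) :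
  exists ps pr pk : R,
    Prob (fun w => Nat.eqb (w 0%nat) s && inD n b w) ps /\
    Prob (fun w => Nat.eqb (w 0%nat) r && inD n b w) pr /\
    Prob (fun w => Nat.eqb (w 0%nat) k && inD n b w) pk /\
    ps <= pr + pk.
Proof.
  destruct (cyl_cv _ (S n) (Ea_dep n b s)) as [ps Hs].
  destruct (cyl_cv _ (S n) (Ea_dep n b r)) as [pr Hr].
  destruct (cyl_cv _ (S n) (Ea_dep n b k)) as [pk Hk].
  exists ps, pr, pk. split; [exact Hs|]. split; [exact Hr|]. split; [exact Hk|].
  apply (lim_le _ _ ps (pr + pk) (S n) Hs (CV_plus _ _ _ _ Hr Hk)).
  intros N HN. destruct N as [|K]; [lia|].
  rewrite !Papprox_eq.
  pose proof (G_nonneg (S K) K n b r). pose proof (G_nonneg (S K) K n b k).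
  assert (0 <= (/2)^r) by (apply pow_le; lra).
  assert (0 <= (/2)^k) by (apply pow_le; lra).
  destruct (Nat.leb s (S K)) eqn:Es.
  - apply Nat.leb_le in Es.
    replace (Nat.leb 1 s) with true by (symmetry; apply Nat.leb_le; lia).
    replace (Nat.leb 1 r) with true by (symmetry; apply Nat.leb_le; lia).
    replace (Nat.leb 1 k) with true by (symmetry; apply Nat.leb_le; lia).
    replace (Nat.leb r (S K)) with true by (symmetry; apply Nat.leb_le; lia).
    replace (Nat.leb k (S K)) with true by (symmetry; apply Nat.leb_le; lia).
    cbn [andb]. apply main_ineq; lia.
  - rewrite andb_false_r.
    destruct (andb (Nat.leb 1 r) (Nat.leb r (S K))); destruct (andb (Nat.leb 1 k) (Nat.leb k (S K))); nra.
Qed.
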